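(* Under the standing hypotheses ($N\ge2$, $l\ge2$, $\sigma\in\mathfrak S_{N,l}$, $J\in\{1,\dots,N\}^k$ nonperiodic, $f\in\mathrm{BFS}_N(\Lambda)$ is $P(J)$, and $\Lambda(p)$ is defined for each $p\in Q_J$ as below): (a) If $\Lambda_0\subset\Lambda$ is such that $f^{(\sigma)}$ restricts to a branching function system on $\Lambda_0$ and $f^{(\sigma)}|_{\Lambda_0}$ is $P(T)$ for some word $T$, then there is $p\in Q_J$ with $\Lambda_0=\Lambda(p)$. (b) For $p,p'\in Q_J$, $p\sim p'$ if and only if $\Lambda(p)=\Lambda(p')$.
   Context: Branching function systems: for an infinite set $\Lambda$, $f=\{f_i\}_{i=1}^N\in\mathrm{BFS}_N(\Lambda)$ means each $f_i$ is injective on $\Lambda$ and $f_1(\Lambda),\dots,f_N(\Lambda)$ partition $\Lambda$. $f_J=f_{j_1}\circ\cdots\circ f_{j_k}$ for $J=(j_1,\dots,j_k)$, $f_0=\mathrm{id}$. $x\sim y$ iff $f_{J_1}(z)=x$, $f_{J_2}(z)=y$ for some words $J_1,J_2$ (possibly empty) and $z$; $A_f(x)=\{y:x\sim y\}$; $f$ is cyclic if $\Lambda=A_f(x)$ for some $x$. $f$ is $P(J)$ ($J=(j_1,\dots,j_k)$) if $f$ is cyclic and there are distinct $n_1,\dots,n_k$ with $f_{j_1}(n_1)=n_k$, $f_{j_2}(n_2)=n_1,\dots,f_{j_k}(n_k)=n_{k-1}$. Restriction $f|_{\Lambda_0}$ is taken when $f_i(\Lambda_0)\subset\Lambda_0$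 and these images partition $\Lambda_0$. For $\sigma\in\mathfrak S_{N,l}$ (permutations of $\{1,\dots,N\}^l$), $f^{(\sigma)}_i(f_K(n))=f_{\sigma(i,K)}(n)$ for $K\in\{1,\dots,N\}^{l-1}$. $J$ nonperiodic: not an $r$-fold concatenation of a word with $r\ge2$. Semi-Mealy machine by $\sigma$: states $q_K$ ($K\in\{1,\dots,N\}^{l-1}$), inputs $a_i$, outputs $b_i$; with $\sigma^{-1}(K,i)=(y_1,\dots,y_l)$, $\delta(q_K,a_i)=q_{(y_2,\dots,y_l)}$, $\lambda(q_K,a_i)=b_{y_1}$, extended to words by $\delta(q,wa)=\delta(\delta(q,w),a)$, $\lambda(q,wa)=\lambda(q,w)\lambda(\delta(q,w),a)$; $a_J=a_{j_1}\cdots a_{j_k}$. $Q_J=\{q:\delta(q,(a_J)^n)=q$ for some $n\ge1\}$, $q\sim q'$ iff $\delta(q,(a_J)^n)=q'$ for some $n\ge1$, $[q]$ its class. Definition of $\Lambda(p)$: let $n_0$ be the unique point with $f_J(n_0)=n_0$. For $p\in Q_J$ let $r=\#[p]$, $\alpha=rk$, extend $J$ periodically ($j_{k(c-1)+i}=j_i$), set $p_1=p$, $p_i=\delta(p_{i-1},a_{j_{i-1}})$ ($2\le i\le\alpha$), write $p_\alpha=q_{I_\alpha}$, let $m(p)=f_{(I_\alpha,j_\alpha)}(n_0)$ and $\Lambda(p)=A_{f^{(\sigma)}}(m(p))$. *)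

(* Defs.v *)
From Stdlib Require Import ClassicalEpsilon.
From mathcomp Require Import all_boot all_fingroup.
Set Implicit Arguments. Unset Strict Implicit. Unset Printing Implicit Defensive.

Section BFS.
Variables (N : nat) (Lam : Type).

Definition fw (f : 'I_N -> Lam -> Lam) (J : seq 'I_N) : Lam -> Lam :=
  foldr (fun j h => fun x => f j (h x)) id J.

Definition infinite_on (D : Lam -> Prop) : Prop :=
  forall s : list Lam, exists x, D x /\ ~ List.In x s.

(* f restricts to a branching function system on D: f_i(D) c D, each f_i is
   injective on D, the f_i(D) partition D, and D is infinite.
   With D = (fun _ => True) this is f \in BFS_N(Lam). *)
Definition BFS_on (f : 'I_N -> Lam -> Lam) (D : Lam -> Prop) : Prop :=
  [/\ forall i x, D x -> D (f i x),
      forall i x y, D x -> D y -> f i x = f i y -> x = y,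
      forall x, D x -> exists! i : 'I_N, exists y, D y /\ f i y = x
    & infinite_on D].

Definition bfs_rel (f : 'I_N -> Lam -> Lam) (D : Lam -> Prop) (x y : Lam) : Prop :=
  exists (J1 J2 : seq 'I_N) (z : Lam), D z /\ fw f J1 z = x /\ fw f J2 z = y.

Definition Aorb (f : 'I_N -> Lam -> Lam) (D : Lam -> Prop) (x : Lam) : Lam -> Prop :=
  fun y => D y /\ bfs_rel f D x y.

Definition cyclic_on (f : 'I_N -> Lam -> Lam) (D : Lam -> Prop) : Prop :=
  exists x, D x /\ forall y, D y <-> Aorb f D x y.

(* f (on D) is P(J): cyclic, and there are distinct n_1..n_k in D with
   f_{j1}(n1) = nk, f_{j2}(n2) = n1, ..., f_{jk}(nk) = n_{k-1}.
   0-indexed: f_{J[i]}(n i) = n ((i + k - 1) mod k). *)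
Definition isP_on (f : 'I_N -> Lam -> Lam) (D : Lam -> Prop) (J : seq 'I_N) : Prop :=
  cyclic_on f D /\
  exists n : nat -> Lam,
    [/\ forall i, i < size J -> D (n i),
        forall i j, i < size J -> j < size J -> n i = n j -> i = j
      & forall i (j : 'I_N), onth J i = Some j ->
          f j (n i) = n ((i + (size J).-1) %% size J)].

End BFS.

Definition nonperiodic (N : nat) (J : seq 'I_N) : Prop :=
  ~ exists (w : seq 'I_N) (r : nat), 2 <= r /\ J = flatten (nseq r w).

Section Sigma.
Variables (N l : nat) (sigma : {perm l.-tuple 'I_N}).

Definition sig_app (w : seq 'I_N) : seq 'I_N :=
  match insub w : option (l.-tuple 'I_N) with
  | Some t => val (sigma t) | None => w end.
Definition siginv_app (w : seq 'I_N) : seq 'I_N :=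
  match insub w : option (l.-tuple 'I_N) with
  | Some t => val ((sigma^-1)%g t) | None => w end.

(* f^(sigma)_i (f_K(n)) = f_{sigma(i,K)}(n), K of length l-1 *)
Definition fsig (Lam : Type) (f : 'I_N -> Lam -> Lam) (i : 'I_N) (x : Lam) : Lam :=
  let p := epsilon (inhabits ([::] : seq 'I_N, x))
             (fun p => size p.1 = l.-1 /\ fw f p.1 p.2 = x) in
  fw f (sig_app (i :: p.1)) p.2.

(* semi-Mealy machine transition: states q_K are words K of length l-1;
   sigma^{-1}(K,i) = (y1,...,yl)  ==>  delta(q_K, a_i) = q_(y2,...,yl) *)
Definition delta (K : seq 'I_N) (i : 'I_N) : seq 'I_N := behead (siginv_app (rcons K i)).
Definition deltaw (K : seq 'I_N) (w : seq 'I_N) : seq 'I_N := foldl delta K w.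

Variable J : seq 'I_N.

Definition inQ (q : seq 'I_N) : Prop :=
  size q = l.-1 /\ exists n, 1 <= n /\ deltaw q (flatten (nseq n J)) = q.

Definition simQ (q q' : seq 'I_N) : Prop :=
  exists n, 1 <= n /\ deltaw q (flatten (nseq n J)) = q'.

Definition pb (P : Prop) : bool := if excluded_middle_informative P then true else false.

Definition class_card (p : seq 'I_N) : nat :=
  #|[set q : (l.-1).-tuple 'I_N | pb (simQ p (val q))]|.

(* Lambda(p): alpha = #[p] * k, J extended periodically to length alpha,
   p_alpha = delta(p, a_{j_1} ... a_{j_{alpha-1}}) = q_{I_alpha},
   m(p) = f_{(I_alpha, j_alpha)}(n0), Lambda(p) = A_{f^(sigma)}(m(p)). *)
Definition Lam_p (Lam : Type) (f : 'I_N -> Lam -> Lam) (n0 : Lam) (p : seq 'I_N) : Lam -> Prop :=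
  let alpha := class_card p * size J in
  let Jr := flatten (nseq (class_card p) J) in
  let palpha := deltaw p (take alpha.-1 Jr) in
  let m := fw f (palpha ++ drop alpha.-1 Jr) n0 in
  Aorb (fsig f) (fun _ => True) m.

End Sigma.

(* Main.v *)
Require Import Defs.
From Stdlib Require Import ClassicalEpsilon.
From mathcomp Require Import all_boot all_fingroup.
From mathcomp Require Import zify.
Set Implicit Arguments. Unset Strict Implicit. Unset Printing Implicit Defensive.


Section Gen.
Variables (N : nat) (Lam : Type) (h : 'I_N -> Lam -> Lam).
Hypothesis Hh : forall i j x y, h i x = h j y -> i = j /\ x = y.

Lemma fw_cat A B x : fw h (A ++ B) x = fw h A (fw h B x).
Proof. by elim: A => //= a A ->. Qed.

Lemma fw_cons i A x : fw h (i :: A) x = h i (fw h A x).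
Proof. by []. Qed.

Lemma U1 A B x y : size A = size B -> fw h A x = fw h B y -> A = B /\ x = y.
Proof.
elim: A B => [|a A IH] [|b B] //=.
move=> [] Hs E; have [-> E2] := Hh E.
by have [-> ->] := IH _ Hs E2.
Qed.

Lemma prefix A B x y : size A <= size B -> fw h A x = fw h B y ->
  x = fw h (drop (size A) B) y.
Proof.
move=> Hs E; move: E; rewrite -{1}(cat_take_drop (size A) B) fw_cat => E.
have Hs2 : size (take (size A) B) = size A by rewrite size_take; case: ltngtP Hs.
by have [_ ->] := U1 (esym Hs2) E.
Qed.

Definition R x y := bfs_rel h (fun _ => True) x y.

Lemma R_refl x : R x x.
Proof. by exists [::], [::], x. Qed.

Lemma R_sym x y : R x y -> R y x.
Proof. by move=> [A [B [z [_ [E1 E2]]]]]; exists B, A, z. Qed.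

Lemma R_trans x y z : R x y -> R y z -> R x z.
Proof.
move=> [A [B [u [_ [E1 E2]]]]] [C [D [v [_ [E3 E4]]]]].
case: (leqP (size B) (size C)) => Hs.
  have Hu := prefix Hs (etrans E2 (esym E3)).
  exists (A ++ drop (size B) C), D, v; split => //; split => //.
  by rewrite fw_cat -Hu.
have Hs' : size C <= size B by apply: ltnW.
have Hv := prefix Hs' (etrans E3 (esym E2)).
exists A, (D ++ drop (size C) B), u; split => //; split => //.
by rewrite fw_cat -Hv.
Qed.

Lemma R_fw A x : R (fw h A x) x.
Proof. by exists A, [::], x. Qed.

End Gen.



Section Sig.
Variables (N l : nat) (sigma : {perm l.-tuple 'I_N}).

Lemma sig_val (t : l.-tuple 'I_N) : sig_app sigma (val t) = val (sigma t).
Proof. by rewrite /sig_app valK. Qed.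
Lemma siginv_val (t : l.-tuple 'I_N) : siginv_app sigma (val t) = val ((sigma^-1)%g t).
Proof. by rewrite /siginv_app valK. Qed.

Lemma size_sig w : size w = l -> size (sig_app sigma w) = l.
Proof. move=> /eqP Hw; have -> : w = val (Tuple Hw) by []. by rewrite sig_val size_tuple. Qed.
Lemma size_siginv w : size w = l -> size (siginv_app sigma w) = l.
Proof. move=> /eqP Hw; have -> : w = val (Tuple Hw) by []. by rewrite siginv_val size_tuple. Qed.
Lemma siginvK w : size w = l -> sig_app sigma (siginv_app sigma w) = w.
Proof. move=> /eqP Hw; have -> : w = val (Tuple Hw) by []. by rewrite siginv_val sig_val permKV. Qed.
Lemma sig_inj w w' : size w = l -> size w' = l -> sig_app sigma w = sig_app sigma w' -> w = w'.
Proof.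
move=> /eqP Hw /eqP Hw'; have -> : w = val (Tuple Hw) by [].
have -> : w' = val (Tuple Hw') by [].
rewrite !sig_val => /val_inj E. by rewrite (perm_inj E).
Qed.

Lemma size_delta K i : size K = l.-1 -> 0 < l -> size (delta sigma K i) = l.-1.
Proof.
move=> HK Hl; rewrite /delta size_behead size_siginv //.
by rewrite size_rcons HK prednK.
Qed.

Lemma size_deltaw K w : size K = l.-1 -> 0 < l -> size (deltaw sigma K w) = l.-1.
Proof. elim: w K => //= i w IH K HK Hl; apply: IH => //; exact: size_delta. Qed.

End Sig.



Section F.
Variables (N l : nat) (Lam : Type) (sigma : {perm l.-tuple 'I_N}) (f : 'I_N -> Lam -> Lam).
Hypothesis Hf : BFS_on f (fun _ => True).
Hypothesis Hl : 0 < l.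

Lemma Hfh i j x y : f i x = f j y -> i = j /\ x = y.
Proof.
case: Hf => _ Hinj Hpart _ E.
have [i0 [_ Hu]] := Hpart (f i x) I.
have Hi : i = i0 by apply: esym; apply: Hu; exists x.
have Hj : j = i0 by apply: esym; apply: Hu; exists y; split => //; rewrite E.
subst; split => //; exact: Hinj E.
Qed.

Lemma E1 t x : exists K y, size K = t /\ fw f K y = x.
Proof.
elim: t x => [|t IH] x; first by exists [::], x.
have [K [y [HK Hy]]] := IH x.
case: Hf => _ _ Hpart _; have [i [[y' [_ Hy']] _]] := Hpart y I.
exists (K ++ [:: i]), y'; split; first by rewrite size_cat HK addn1.
by rewrite fw_cat /= Hy'.
Qed.

Notation g := (fsig sigma f).

Lemma fsig_spec i K y : size K = l.-1 -> g i (fw f K y) = fw f (sig_app sigma (i :: K)) y.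
Proof.
move=> HK; rewrite /fsig /=.
set P := (fun p : seq 'I_N * Lam => size p.1 = l.-1 /\ fw f p.1 p.2 = fw f K y).
have He : P (epsilon (inhabits ([::], fw f K y)) P).
  by apply: epsilon_spec; exists (K, y).
case: He => H1 H2.
have [-> ->] := U1 Hfh (etrans H1 (esym HK)) H2 => //.
Qed.

Lemma Hgh i j x y : g i x = g j y -> i = j /\ x = y.
Proof.
have [K [u [HK <-]]] := E1 l.-1 x.
have [K' [u' [HK' <-]]] := E1 l.-1 y.
rewrite !fsig_spec // => E.
have Hs : forall i (K : seq 'I_N), size K = l.-1 -> size (i :: K) = l.
  by move=> ? ? /= ->; rewrite prednK.
have [E2 ->] := U1 Hfh (etrans (size_sig sigma (Hs i K HK)) (esym (size_sig sigma (Hs j K' HK')))) E.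
by have [-> ->] : i = j /\ K = K' by case: (sig_inj (Hs i K HK) (Hs j K' HK') E2).
Qed.

Lemma M1 K i y : size K = l.-1 ->
  fw f (rcons K i) y = g (head i (siginv_app sigma (rcons K i))) (fw f (delta sigma K i) y).
Proof.
move=> HK; have Hs : size (rcons K i) = l by rewrite size_rcons HK prednK.
have Hs' := size_siginv sigma Hs.
rewrite fsig_spec; last exact: size_delta.
rewrite /delta; case E: (siginv_app sigma (rcons K i)) Hs' => [|a s] /=.
  by move=> H; exfalso; move: Hl; rewrite -H.
by move=> _; rewrite -E siginvK.
Qed.

Lemma M2 w K y : size K = l.-1 ->
  exists W, size W = size w /\ fw f (K ++ w) y = fw g W (fw f (deltaw sigma K w) y).
Proof.
elim: w K => [|i w IH] K HK /=; first by exists [::]; rewrite cats0.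
have [W [HW E]] := IH (delta sigma K i) (size_delta sigma i HK Hl).
exists (head i (siginv_app sigma (rcons K i)) :: W); split; first by rewrite /= HW.
by rewrite -cat_rcons fw_cat M1 // -fw_cat E.
Qed.

Lemma M3 w K y : size K = l.-1 -> R g (fw f (K ++ w) y) (fw f (deltaw sigma K w) y).
Proof. move=> HK; have [W [_ ->]] := M2 w y HK; exact: R_fw. Qed.

End F.



Lemma mod2 m k : m < k + k -> m %% k = if m < k then m else m - k.
Proof.
move=> H; case: ltnP => H2; first by rewrite modn_small.
have -> : m = (m - k) + k by lia.
rewrite modnDr modn_small; lia.
Qed.

Lemma arith1 j k : j < k -> ((j+1) %% k + k.-1) %% k = j.
Proof.
move=> Hj.
have H1 : (j+1) %% k = if j + 1 < k then j + 1 else j + 1 - k by apply: mod2; lia.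
rewrite H1. case: ifP => H2.
- rewrite mod2; last lia. case: ifP => H3; lia.
- rewrite mod2; last lia. case: ifP => H3; lia.
Qed.
Lemma arith2 c e e' k: c<k -> e<k -> e'<k -> (c+e)%%k = (c+e')%%k -> e=e'.
Proof.
move=> Hc He He'.
rewrite (@mod2 (c+e) k); last lia. rewrite (@mod2 (c+e') k); last lia.
case: ifP => H1; case: ifP => H2; lia.
Qed.

Lemma onth_lt (T : Type) (s : seq T) i : i < size s -> exists x, onth s i = Some x.
Proof. elim: s i => [|a s IH] [|i] //=; [by exists a | exact: IH]. Qed.

Section Cyc.
Variables (N : nat) (Lam : Type) (f : 'I_N -> Lam -> Lam) (J : seq 'I_N) (n0 : Lam).
Hypothesis Hf : BFS_on f (fun _ => True).
Hypothesis HP : isP_on f (fun _ => True) J.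
Hypothesis HJ : fw f J n0 = n0.
Hypothesis Hk : 0 < size J.

Lemma fw_Jn r : fw f (flatten (nseq r J)) n0 = n0.
Proof. elim: r => //= r IH; by rewrite fw_cat IH HJ. Qed.

Lemma size_Jn r : size (flatten (nseq r J)) = r * size J.
Proof. elim: r => //= r IH; by rewrite size_cat IH mulSn. Qed.

Definition Tf x := epsilon (inhabits x) (fun y => exists i, f i y = x).

Lemma Tf_f i y : Tf (f i y) = y.
Proof.
have : exists i0, f i0 (Tf (f i y)) = f i y.
  rewrite /Tf; apply: (epsilon_spec (inhabits (f i y)) (fun y0 => exists i0, f i0 y0 = f i y)).
  by exists y, i.
by case=> i0 /(Hfh Hf) [_ ->].
Qed.

Lemma iter_Tf A y : iter (size A) Tf (fw f A y) = y.
Proof. elim: A => // a A IH; by rewrite [size _]/= iterSr fw_cons Tf_f. Qed.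

Lemma iter_drop e : e <= size J -> iter e Tf n0 = fw f (drop e J) n0.
Proof.
move=> He; have := iter_Tf (take e J) (fw f (drop e J) n0).
by rewrite -fw_cat cat_take_drop HJ size_take; case: ltngtP He => // -> .
Qed.


Lemma dist e e' : e < size J -> e' < size J ->
  fw f (drop e J) n0 = fw f (drop e' J) n0 -> e = e'.
Proof.
move=> He He'; rewrite -(iter_drop (ltnW He)) -(iter_drop (ltnW He')) => E.
case: HP => [[xs [_ Hxs]] [nc [Hnc1 Hnc2 Hnc3]]].
have step j : j < size J -> Tf (nc j) = nc ((j + 1) %% size J).
  move=> Hj.
  have Hi : (j + 1) %% size J < size J by rewrite ltn_pmod.
  have [jj Hjj] := onth_lt Hi.
  have := Hnc3 _ _ Hjj.
  rewrite arith1 //.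
  by move=> <-; rewrite Tf_f.
have cyc t j : j < size J -> iter t Tf (nc j) = nc ((j + t) %% size J).
  move=> Hj; elim: t => [|t IH]; first by rewrite addn0 modn_small.
  by rewrite iterS IH step ?ltn_pmod // modnDml; congr (nc (_ %% _)); lia.
have Hx0 : R f xs n0 by case: (Hxs n0) => H _; case: (H I).
have Hx1 : R f xs (nc 0) by case: (Hxs (nc 0)) => H _; case: (H I).
have [A [B [z [_ [EA EB]]]]] := R_trans (Hfh Hf) (R_sym Hx0) Hx1.
have Ha : iter (size A) Tf n0 = nc ((size B) %% size J).
  by rewrite -EA iter_Tf; have := cyc (size B) 0 Hk; rewrite -EB iter_Tf add0n.
have key e0 : iter e0 Tf (nc (size B %% size J)) = iter (size A) Tf (iter e0 Tf n0).
  by rewrite -Ha -!iterD addnC.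
have Hc : size B %% size J < size J by rewrite ltn_pmod.
have := key e; rewrite E -key !cyc // => /Hnc2.
rewrite !ltn_pmod // => /(_ isT isT).
exact: arith2.
Qed.

End Cyc.



Section Main.
Variables (N l : nat) (Lam : Type) (sigma : {perm l.-tuple 'I_N})
  (J : seq 'I_N) (f : 'I_N -> Lam -> Lam) (n0 : Lam).
Hypothesis Hl : 0 < l.
Hypothesis Hf : BFS_on f (fun _ => True).
Hypothesis HP : isP_on f (fun _ => True) J.
Hypothesis HJ : fw f J n0 = n0.
Hypothesis Hk : 0 < size J.

Notation g := (fsig sigma f).
Let Hg := @Hgh N l Lam sigma f Hf Hl.
Definition G q := deltaw sigma q J.
Notation Jn r := (flatten (nseq r J)).

Lemma deltaw_cat q u v : deltaw sigma q (u ++ v) = deltaw sigma (deltaw sigma q u) v.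
Proof. by rewrite /deltaw foldl_cat. Qed.

Lemma deltaw_Jn n q : deltaw sigma q (Jn n) = iter n G q.
Proof. elim: n q => // n IH q; by rewrite [Jn _]/= deltaw_cat IH iterSr. Qed.

Lemma size_iterG n q : size q = l.-1 -> size (iter n G q) = l.-1.
Proof. move=> Hq; elim: n => //= n IH; exact: size_deltaw. Qed.

Lemma Rm q r a : size q = l.-1 ->
  R g (fw f q n0) (fw f (deltaw sigma q (take a (Jn r)) ++ drop a (Jn r)) n0).
Proof.
move=> Hq; rewrite fw_cat.
have := M3 sigma Hf Hl (take a (Jn r)) (fw f (drop a (Jn r)) n0) Hq.
have -> // : fw f (q ++ take a (Jn r)) (fw f (drop a (Jn r)) n0) = fw f q n0.
by rewrite fw_cat; congr (fw f q _); rewrite -fw_cat cat_take_drop fw_Jn.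
Qed.

Lemma Lam_p_iff p x : size p = l.-1 ->
  (Lam_p sigma J f n0 p x <-> R g (fw f p n0) x).
Proof.
move=> Hp; rewrite /Lam_p /Aorb /=.
have HR := Rm (class_card sigma J p) ((class_card sigma J p * size J).-1) Hp.
split => [[_ H]|H]; first by apply: (R_trans Hg HR); exact: H.
split => //; by apply: (R_trans Hg (R_sym HR)); exact: H.
Qed.

Lemma EXP q d : size q = l.-1 -> exists W, size W = d /\
  fw f q n0 = fw g W (fw f (deltaw sigma q (Jn (d %/ size J) ++ take (d %% size J) J))
                        (fw f (drop (d %% size J) J) n0)).
Proof.
move=> Hq.
have [W [HW E]] := M2 sigma Hf Hl (Jn (d %/ size J) ++ take (d %% size J) J)
                     (fw f (drop (d %% size J) J) n0) Hq.
exists W; split.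
  rewrite HW size_cat size_Jn size_take ltn_pmod //.
  by rewrite {3}(divn_eq d (size J)).
rewrite -E fw_cat; congr (fw f q _).
by rewrite fw_cat -(@fw_cat _ _ f (take _ J)) cat_take_drop HJ fw_Jn.
Qed.

Lemma PER p p' u v : inQ sigma J p' -> iter u G p = iter v G p' -> simQ sigma J p p'.
Proof.
move=> [_ [P [HP1 HP2]]] E; rewrite deltaw_Jn in HP2.
have HM M : iter (M * P) G p' = p'.
  by elim: M => // M IH; rewrite mulSn iterD IH HP2.
exists (v.+1 * P - v + u); split.
  have : v.+1 <= v.+1 * P by rewrite leq_pmulr.
  lia.
rewrite deltaw_Jn iterD E -iterD subnK; first exact: HM.
have : v.+1 <= v.+1 * P by rewrite leq_pmulr.
lia.
Qed.

Lemma PH q0 : size q0 = l.-1 -> exists s n, 0 < n /\ iter n G (iter s G q0) = iter s G q0.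
Proof.
move=> Hq0; have Hq0' : size q0 == l.-1 by apply/eqP.
pose t0 : (l.-1).-tuple 'I_N := Tuple Hq0'.
pose F (i : 'I_(#|{: (l.-1).-tuple 'I_N}|.+1)) : (l.-1).-tuple 'I_N := insubd t0 (iter i G q0).
have HF : ~~ injectiveb F.
  apply/negP => /injectiveP Hinj; have := @leq_card _ _ F Hinj.
  rewrite card_ord ltnn => H; discriminate H.
case/injectivePn: HF => i [j Hij EF].
have E : iter i G q0 = iter j G q0.
  have := congr1 val EF; rewrite !val_insubd !size_iterG; [|exact: Hq0|exact: Hq0].
  by rewrite eqxx.
have Hne : nat_of_ord i <> nat_of_ord j.
  move=> H; move/eqP: Hij; apply; exact: val_inj.
move: E Hne; move: (nat_of_ord i) (nat_of_ord j) => a b E Hne.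
case: (ltngtP a b) => Hc.
- exists a, (b - a); split; first by rewrite subn_gt0.
  rewrite -iterD subnK; [exact: (esym E) | exact: ltnW].
- exists b, (a - b); split; first by rewrite subn_gt0.
  rewrite -iterD subnK; [exact: E | exact: ltnW].
- by exfalso; apply: Hne.
Qed.

End Main.



Theorem lemma3p1 (N l : nat) (Lam : Type) (sigma : {perm l.-tuple 'I_N})
  (J : seq 'I_N) (f : 'I_N -> Lam -> Lam) (n0 : Lam) :
  2 <= N -> 2 <= l ->
  nonperiodic J ->
  BFS_on f (fun _ => True) ->
  isP_on f (fun _ => True) J ->
  fw f J n0 = n0 ->
  (* (a) *)
  (forall Lam0 : Lam -> Prop,
     BFS_on (fsig sigma f) Lam0 ->
     (exists T : seq 'I_N, T <> [::] /\ isP_on (fsig sigma f) Lam0 T) ->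
     exists p, inQ sigma J p /\ forall x, Lam0 x <-> Lam_p sigma J f n0 p x)
  /\
  (* (b) *)
  (forall p p', inQ sigma J p -> inQ sigma J p' ->
     (simQ sigma J p p' <-> forall x, Lam_p sigma J f n0 p x <-> Lam_p sigma J f n0 p' x)).
Proof.
move=> HN Hl2 Hnp Hf HP HJ.
have Hl : 0 < l by apply: ltnW.
have Hk : 0 < size J.
  case: (posnP (size J)) => // /size0nil EJ.
  by exfalso; apply: Hnp; exists [::], 2; rewrite EJ.
have Hg := @Hgh N l Lam sigma f Hf Hl.
have Hfh' := Hfh Hf.
split.
- move=> Lam0 HB [T [_ [[x0 [Hx0 Hcyc]] _]]].
  case: HB => Hcl _ Hpart _.
  have down : forall A z, Lam0 (fw (fsig sigma f) A z) -> Lam0 z.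
    elim=> [|a A IH] z //= H.
    have [i [[y' [Hy' E]] _]] := Hpart _ H.
    have [_ Ey] := Hg _ _ _ _ E.
    by apply: IH; rewrite -Ey.
  have up : forall A z, Lam0 z -> Lam0 (fw (fsig sigma f) A z).
    by elim=> [|a A IH] z //= H; apply: Hcl; apply: IH.
  have HL0 : forall y, Lam0 y <-> R (fsig sigma f) x0 y.
    move=> y; split.
      by move/Hcyc => [_ [A [B [z [_ [E1 E2]]]]]]; exists A, B, z.
    move=> [A [B [z [_ [E1 E2]]]]]; rewrite -E2; apply: up; apply: (down A).
    by rewrite E1.
  case: HP => [[xs [_ Hxs]] _].
  have Hx0' : R f xs x0 by case: (Hxs x0) => H _; case: (H I).
  have Hn0 : R f xs n0 by case: (Hxs n0) => H _; case: (H I).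
  have [A [B [z [_ [EA EB]]]]] := R_trans Hfh' (R_sym Hx0') Hn0.
  have Hs : size B <= size (flatten (nseq (size B) J)).
    by rewrite (size_Jn J (size B)) leq_pmulr.
  have Hz := prefix Hfh' Hs (etrans EB (esym (fw_Jn HJ (size B)))).
  set u := A ++ drop (size B) (flatten (nseq (size B) J)).
  have Hu : x0 = fw f u n0 by rewrite fw_cat -Hz.
  set u1 := u ++ flatten (nseq l J).
  have Hu1 : x0 = fw f u1 n0 by rewrite fw_cat (fw_Jn HJ).
  have Hsu1 : l.-1 <= size u1.
    rewrite size_cat (size_Jn J l).
    have : l <= l * size J by rewrite leq_pmulr.
    lia.
  set K := take l.-1 u1; set w1 := drop l.-1 u1.
  have HK : size K = l.-1 by rewrite size_takel.
  have Hq0 := size_deltaw sigma w1 HK Hl.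
  have [s [n [Hn Hsn]]] := PH sigma J Hl Hq0.
  set q := iter s (G sigma J) (deltaw sigma K w1) in Hsn.
  have Hq : size q = l.-1 by apply: size_iterG.
  exists q; split.
    split => //; exists n; split => //; by rewrite deltaw_Jn.
  have Hx0q : R (fsig sigma f) x0 (fw f q n0).
    have := M3 sigma Hf Hl (w1 ++ flatten (nseq s J)) n0 HK.
    rewrite deltaw_cat deltaw_Jn -/q.
    have -> // : fw f (K ++ w1 ++ flatten (nseq s J)) n0 = x0.
    by rewrite catA cat_take_drop fw_cat (fw_Jn HJ).
  move=> y; rewrite (Lam_p_iff sigma Hl Hf HJ y Hq) HL0.
  split => H.
    exact: (R_trans Hg (R_sym Hx0q) H).
  exact: (R_trans Hg Hx0q H).
- move=> p p' Hp Hp'.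
  have Hsp : size p = l.-1 by case: Hp.
  have Hsp' : size p' = l.-1 by case: Hp'.
  split.
  + move=> [n [Hn E]] x.
    rewrite (Lam_p_iff sigma Hl Hf HJ x Hsp) (Lam_p_iff sigma Hl Hf HJ x Hsp').
    have HR : R (fsig sigma f) (fw f p n0) (fw f p' n0).
      have := M3 sigma Hf Hl (flatten (nseq n J)) n0 Hsp.
      by rewrite E fw_cat (fw_Jn HJ).
    split => H.
      exact: (R_trans Hg (R_sym HR) H).
    exact: (R_trans Hg HR H).
  + move=> Hx.
    have : R (fsig sigma f) (fw f p n0) (fw f p' n0).
      apply/(Lam_p_iff sigma Hl Hf HJ _ Hsp); apply/Hx.
      apply/(Lam_p_iff sigma Hl Hf HJ _ Hsp'); exact: R_refl.
    move=> [A [B [z [_ [EA EB]]]]].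
    have [W [HW EW]] := EXP sigma Hl Hf HJ Hk (size A) Hsp.
    have [W' [HW' EW']] := EXP sigma Hl Hf HJ Hk (size B) Hsp'.
    have [_ Hz] := U1 Hg (esym HW) (etrans EA EW).
    have [_ Hz'] := U1 Hg (esym HW') (etrans EB EW').
    have Hs1 := size_deltaw sigma (flatten (nseq (size A %/ size J) J) ++ take (size A %% size J) J) Hsp Hl.
    have Hs2 := size_deltaw sigma (flatten (nseq (size B %/ size J) J) ++ take (size B %% size J) J) Hsp' Hl.
    have [Eq1 Eq2] := U1 Hfh' (etrans Hs1 (esym Hs2)) (etrans (esym Hz) Hz').
    have Ee := dist Hf HP HJ Hk (ltn_pmod _ Hk) (ltn_pmod _ Hk) Eq2.
    have key : forall q d, deltaw sigma q ((flatten (nseq (d %/ size J) J) ++ take (d %% size J) J) ++ drop (d %% size J) J) = iter (d %/ size J).+1 (G sigma J) q.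
      by move=> q d; rewrite -catA cat_take_drop deltaw_cat deltaw_Jn.
    have Efin : iter (size A %/ size J).+1 (G sigma J) p = iter (size B %/ size J).+1 (G sigma J) p'.
      by rewrite -!key deltaw_cat Eq1 -deltaw_cat Ee.
    exact: (PER Hl Hk Hp' Efin).
Qed.
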